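(* Let $k\geq 2$, $n,m,p,z$ be nonnegative integers, and let $R\in\mathcal R^n_{m,p,z}\cap\mathcal M$. Let $w$ be chosen uniformly at random from $[k]^n$, and let $B_R$ be the event that $w$ contains a regular pair of twins $(w_1,w_2)$ with $R(w_1,w_2,w)=R$. Then \[ \Pr[B_R]=(1/k)^m(1-1/k)^{p+n-2m-z}. \]
   Context: $[k]=\{1,\dots,k\}$; $w[i]$ is the $i$-th letter of $w$. Two subsequences of $w$ are twins if they are equal as words and use disjoint sets of positions of $w$. Twins $(w_1,w_2)$ are monotone if for every $i$ the $i$-th letter of $w_1$ occurs in $w$ before the $i$-th letter of $w_2$. For monotone twins, $R(w_1,w_2,w)\in\{0,1,2\}^n$ is given by $R[i]=0$ if position $i$ is in neither twin, $1$ if it is in $w_1$, $2$ if it is in $w_2$. Monotone twins are regular if (a) there are no $i<j$ with $R[i]=2$, $R[j]=1$, $R[k']=0$ for all $i<k'<j$, and $w[i]=w[j]$; and (b) there are no $i<j$ with $R[i]\in\{1,2\}$, $R[j]=0$, $R[k']=0$ for all $i<k'<j$, and $w[i]=w[j]$. $\mathcal R^n_m$ is the set of words in $\{0,1,2\}^n$ in which the letters $1$ and $2$ each occur exactly $m$ times. For $R\in\{0,1,2\}^n$, $p(R)$ is the number of occurrences of the pattern consisting of a $2$, followed by zero or more $0$'s, followed by a $1$ (as consecutive letters), and $z(R)$ is the length of the longest prefix of $R$ consisting only of $0$'s. $\mathcal R^n_{m,p,z}=\{R\in\mathcal R^n_m: p(R)=p,\ z(R)=z\}$. $\mathcal M$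 is the set of words in $\{0,1,2\}^n$ in which every prefix contains at least as many $1$'s as $2$'s. *)

(* Defs.v *)
From HB Require Import structures.
From mathcomp Require Import all_boot all_order all_algebra.
Set Implicit Arguments. Unset Strict Implicit. Unset Printing Implicit Defensive.

(* Words R in {0,1,2}^n are sequences of naturals (letters 0,1,2);
   words w in [k]^n are n-tuples over 'I_k (letter a+1 of [k] <-> a : 'I_k). *)

Definition between0 (R : seq nat) (i j : nat) : bool :=
  all (fun t => nth 0 R t == 0) (iota i.+1 (j - i.+1)).

Definition pat21 (R : seq nat) (i j : nat) : bool :=
  [&& i < j, j < size R, nth 0 R i == 2, nth 0 R j == 1 & between0 R i j].

Definition p_of (R : seq nat) : nat :=
  \sum_(i < size R) \sum_(j < size R) pat21 R i j.

Definition z_of (R : seq nat) : nat :=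
  \max_(l < (size R).+1 | all (fun x => x == 0) (take l R)) l.

Definition in_Rnm (n m : nat) (R : seq nat) : bool :=
  [&& size R == n, all (fun x => x < 3) R,
      count_mem 1 R == m & count_mem 2 R == m].

Definition in_M (R : seq nat) : Prop :=
  forall l, count_mem 2 (take l R) <= count_mem 1 (take l R).

Section Twins.
Variables (k n : nat).
Implicit Types (w : n.-tuple 'I_k) (S : {set 'I_n}).

Definition subword w S : seq 'I_k := [seq tnth w i | i <- enum S].

Definition positions S : seq nat := [seq val i | i <- enum S].

Definition twins w S1 S2 : bool :=
  [disjoint S1 & S2] && (subword w S1 == subword w S2).

Definition monotone S1 S2 : bool :=
  [forall t : 'I_n, (t < #|S1|) ==> (nth 0 (positions S1) t < nth 0 (positions S2) t)].

Definition R_of S1 S2 : seq nat :=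
  [seq (if i \in S1 then 1 else if i \in S2 then 2 else 0) | i <- enum 'I_n].

Definition regular w S1 S2 : bool :=
  let R := R_of S1 S2 in
  [forall i : 'I_n, forall j : 'I_n,
     ~~ [&& i < j, nth 0 R i == 2, nth 0 R j == 1, between0 R i j
          & tnth w i == tnth w j]] &&
  [forall i : 'I_n, forall j : 'I_n,
     ~~ [&& i < j, nth 0 R i \in [:: 1; 2], nth 0 R j == 0, between0 R i j
          & tnth w i == tnth w j]].

Definition B_event (R : seq nat) w : bool :=
  [exists S1 : {set 'I_n}, exists S2 : {set 'I_n},
     [&& twins w S1 S2, monotone S1 S2, regular w S1 S2 & R_of S1 S2 == R]].

End Twins.

Definition prob_B (k n : nat) (R : seq nat) : rat :=
  (#|[set w : n.-tuple 'I_k | B_event R w]|)%:R / (k ^ n)%:R.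

(* Main.v *)
Require Import Defs.
From HB Require Import structures.
From mathcomp Require Import all_boot all_order all_algebra.
From mathcomp Require Import zify.
Set Implicit Arguments. Unset Strict Implicit. Unset Printing Implicit Defensive.

Lemma between0P R i j :
  reflect (forall t, i < t < j -> nth 0 R t = 0) (between0 R i j).
Proof.
have E t : (t \in iota i.+1 (j - i.+1)) = (i < t < j).
  rewrite mem_iota; case: (leqP i.+1 j) => h; first by rewrite subnKC.
  have -> : j - i.+1 = 0 by apply/eqP; rewrite subn_eq0 ltnW.
  rewrite addn0.
  apply/idP/idP => /andP[a b].
    by move: (leq_trans b a); rewrite ?addn0 ltnn.
  by rewrite ltnS in h; move: (leq_trans b (leq_trans h (ltnW a))); rewrite ltnn.
apply: (iffP allP) => H t.
  by rewrite -E => /H /eqP.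
by rewrite E => /H ->.
Qed.

Lemma all_iotaS (P : pred nat) n : all P (iota 0 n.+1) = all P (iota 0 n) && P n.
Proof. by rewrite -addn1 iotaD all_cat /= andbT. Qed.

Lemma nth_rcons0 (R : seq nat) r i : i < size R -> nth 0 (rcons R r) i = nth 0 R i.
Proof. by move=> H; rewrite nth_rcons H. Qed.

Lemma between0_rcons R r i j : j <= size R -> between0 (rcons R r) i j = between0 R i j.
Proof.
move=> hj; apply/between0P/between0P => H t /andP[it tj].
  by rewrite -(nth_rcons0 r (leq_trans tj hj)) H ?it.
by rewrite nth_rcons0 ?(leq_trans tj hj) // H ?it.
Qed.

Lemma lastnz_uniq R i i' : nth 0 R i != 0 -> nth 0 R i' != 0 ->
  between0 R i (size R) -> between0 R i' (size R) -> i < size R -> i' < size R -> i = i'.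
Proof.
move=> h h' /between0P b /between0P b' hi hi'.
case: (ltngtP i i') => // [lt|lt].
  by move: h'; rewrite b ?lt.
by move: h; rewrite b' ?lt.
Qed.

Definition hasnz (R : seq nat) := has (fun x => x != 0) R.

Lemma lastnz_ex R : hasnz R -> exists2 i, i < size R & (nth 0 R i != 0) && between0 R i (size R).
Proof.
elim/last_ind: R => [//|R r IH].
rewrite /hasnz -cats1 has_cat /= orbF cats1 size_rcons.
case: (boolP (r != 0)) => hr.
  move=> _; exists (size R) => //; rewrite nth_rcons ltnn eqxx hr /=.
  by apply/between0P => t /andP[a b]; move: (leq_trans a b); rewrite ltnn.
rewrite orbF => /IH [i hi /andP[h1 /between0P h2]].
exists i; first exact: ltnW.
rewrite nth_rcons0 // h1 /=; apply/between0P => t /andP[a b].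
rewrite nth_rcons; case: ltnP => c; first by rewrite h2 ?a.
have -> : t = size R by apply/eqP; rewrite eqn_leq c -ltnS b.
by rewrite eqxx; move: hr; rewrite negbK => /eqP.
Qed.

Definition l2 (R : seq nat) :=
  has (fun i => (nth 0 R i == 2) && between0 R i (size R)) (iota 0 (size R)).

Lemma sum_count n (P : pred nat) : \sum_(i < n) (P i : nat) = count P (iota 0 n).
Proof.
rewrite -(big_mkord xpredT (fun i => (P i : nat))) /index_iota subn0.
by elim: (iota 0 n) => [|x s IH]; rewrite ?big_nil ?big_cons //= IH.
Qed.

Lemma count_l2 R : count (fun i => (nth 0 R i == 2) && between0 R i (size R)) (iota 0 (size R)) = l2 R.
Proof.
rewrite /l2; case: hasP => [[i0 hi0 /andP[h1 h2]]|hn]; last first.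
  apply/eqP; rewrite -leqn0 leqNgt -has_count; apply/hasP => -[x hx hp]; apply: hn; by exists x.
rewrite (eq_in_count (a2 := pred1 i0)) ?count_uniq_mem ?iota_uniq ?hi0 //.
move=> x hx /=; apply/idP/idP => [/andP[a b]|/eqP->]; last by rewrite h1 h2.
apply/eqP; move: hi0 hx; rewrite !mem_iota /= !add0n => hi0 hx.
by apply: (lastnz_uniq _ _ b h2) => //; rewrite ?(eqP a) ?(eqP h1).
Qed.

Lemma p_of_rcons R r : p_of (rcons R r) = p_of R + ((r == 1) && l2 R).
Proof.
rewrite /p_of size_rcons big_ord_recr /=.
rewrite [X in _ + X]big1 ?addn0; last first.
  move=> j _; rewrite /pat21 size_rcons ltnS.
  by case: (leqP j (size R)) => h.
under eq_bigr => i _ do rewrite big_ord_recr.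
rewrite big_split; congr (_ + _).
  apply: eq_bigr => i _; apply: eq_bigr => j _.
  have -> : (widen_ord (leqnSn (size R)) j : nat) = j by [].
  rewrite /pat21 size_rcons !nth_rcons0 // between0_rcons; last exact: ltnW.
  by rewrite (ltn_ord j) ltnS (ltnW (ltn_ord j)).
have -> : nat_of_ord (@ord_max (size R)) = size R by [].
rewrite (eq_bigr (fun i : 'I_(size R) => ((r == 1) && ((nth 0 R i == 2) && between0 R i (size R)) : nat))); last first.
  move=> i _; rewrite /pat21 size_rcons ltnSn nth_rcons0 // nth_rcons ltnn eqxx between0_rcons // ltn_ord.
  by case: (r == 1); case: (nth 0 R i == 2).
case: (r =P 1) => [_|hr].
  by rewrite -count_l2 -sum_count; apply: eq_bigr.
by rewrite big1.
Qed.


Lemma z_ofE R : z_of R = find (fun x => x != 0) R.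
Proof.
have key l : l <= size R -> all (fun x => x == 0) (take l R) = (l <= find (fun x => x != 0) R).
  move=> hl; rewrite -(eq_all (a1 := predC (fun x => x != 0))); last by move=> x /=; rewrite negbK.
  by rewrite all_predC has_take_leq // -leqNgt.
apply/eqP; rewrite eqn_leq; apply/andP; split.
  apply/bigmax_leqP => l; rewrite key; first by []. by rewrite -ltnS ltn_ord.
have hf : find (fun x => x != 0) R < (size R).+1 by rewrite ltnS find_size.
apply: (leq_trans _ (leq_bigmax_cond (Ordinal hf) _)) => //=.
by rewrite key // find_size.
Qed.

Lemma z_of_rcons R r : z_of (rcons R r) = z_of R + ((r == 0) && ~~ hasnz R).
Proof.
rewrite !z_ofE -cats1 find_cat /hasnz; case: (boolP (has _ R)) => h.
  by rewrite andbF addn0.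
rewrite andbT (hasNfind h) /=.
by case: r => [|r] /=; rewrite ?addn0 ?addn1.
Qed.

Definition onesW (R W : seq nat) := [seq nth 0 W i | i <- iota 0 (size R) & nth 0 R i == 1].
Definition twosW (R W : seq nat) := [seq nth 0 W i | i <- iota 0 (size R) & nth 0 R i == 2].
Definition regA (R W : seq nat) := all (fun i => all (fun j =>
  ~~ [&& i < j, nth 0 R i == 2, nth 0 R j == 1, between0 R i j & nth 0 W i == nth 0 W j])
  (iota 0 (size R))) (iota 0 (size R)).
Definition regB (R W : seq nat) := all (fun i => all (fun j =>
  ~~ [&& i < j, nth 0 R i \in [:: 1; 2], nth 0 R j == 0, between0 R i j & nth 0 W i == nth 0 W j])
  (iota 0 (size R))) (iota 0 (size R)).
Definition G (R W : seq nat) :=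
  [&& twosW R W == take (count_mem 2 R) (onesW R W), regA R W & regB R W].
Definition locA (R W : seq nat) a := all (fun i =>
  ~~ [&& nth 0 R i == 2, between0 R i (size R) & nth 0 W i == a]) (iota 0 (size R)).
Definition locB (R W : seq nat) a := all (fun i =>
  ~~ [&& nth 0 R i \in [:: 1; 2], between0 R i (size R) & nth 0 W i == a]) (iota 0 (size R)).
Definition loc R W r a :=
  if r == 0 then locB R W a else if r == 1 then locA R W a
  else a == nth 0 (onesW R W) (count_mem 2 R).

Lemma iotaS0 n : iota 0 n.+1 = rcons (iota 0 n) n.
Proof. by rewrite -addn1 iotaD cats1. Qed.

Lemma count_nth_iota (P : pred nat) R : count (fun i => P (nth 0 R i)) (iota 0 (size R)) = count P R.
Proof. by rewrite -count_map map_nth_iota0 // take_size. Qed.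

Lemma size_onesW R W : size (onesW R W) = count_mem 1 R.
Proof. by rewrite size_map size_filter (count_nth_iota (pred1 1)). Qed.
Lemma size_twosW R W : size (twosW R W) = count_mem 2 R.
Proof. by rewrite size_map size_filter (count_nth_iota (pred1 2)). Qed.

Lemma filt_rcons (c : nat) R W r a : size W = size R ->
  [seq nth 0 (rcons W a) i | i <- iota 0 (size (rcons R r)) & nth 0 (rcons R r) i == c]
  = [seq nth 0 W i | i <- iota 0 (size R) & nth 0 R i == c] ++ (if r == c then [:: a] else [::]).
Proof.
move=> hs; rewrite size_rcons iotaS0 filter_rcons nth_rcons ltnn eqxx.
rewrite (eq_in_filter (a2 := fun i => nth 0 R i == c)); last first.
  by move=> i; rewrite mem_iota => /andP[_ hi]; rewrite nth_rcons0.
have E : [seq nth 0 (rcons W a) i | i <- iota 0 (size R) & nth 0 R i == c] =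
  [seq nth 0 W i | i <- iota 0 (size R) & nth 0 R i == c].
  apply/eq_in_map => i; rewrite mem_filter mem_iota => /andP[_ /andP[_ hi]].
  by rewrite nth_rcons0 // hs.
case: (r == c); rewrite ?map_rcons ?cats1 ?cats0 E //.
by rewrite nth_rcons -hs ltnn eqxx.
Qed.

Lemma all2_rcons n (Q : nat -> nat -> bool) :
  all (fun i => all (Q i) (iota 0 n.+1)) (iota 0 n.+1) =
  [&& all (fun i => all (Q i) (iota 0 n)) (iota 0 n), all (fun i => Q i n) (iota 0 n)
    & all (Q n) (iota 0 n.+1)].
Proof.
rewrite all_iotaS (eq_all (a2 := fun i => all (Q i) (iota 0 n) && Q i n)); last first.
  by move=> i; rewrite all_iotaS.
by rewrite all_predI andbA.
Qed.

Lemma all_false_tail n (Q : nat -> nat -> bool) :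
  (forall j, j < n.+1 -> Q n j) -> all (Q n) (iota 0 n.+1).
Proof. by move=> H; apply/allP => j; rewrite mem_iota => /andP[_ hj]; apply: H. Qed.

Lemma regA_rcons R W r a : size W = size R ->
  regA (rcons R r) (rcons W a) = regA R W && ((r == 1) ==> locA R W a).
Proof.
move=> hs; rewrite /regA size_rcons all2_rcons.
rewrite [X in [&& _, _ & X]](_ : _ = true) ?andbT; last first.
  by apply/allP => j; rewrite mem_iota => /andP[_ hj]; rewrite ltnNge -ltnS hj.
congr (_ && _).
  apply: eq_in_all => i; rewrite mem_iota => /andP[_ hi].
  apply: eq_in_all => j; rewrite mem_iota => /andP[_ hj].
  by rewrite !nth_rcons0 ?hs // between0_rcons // ltnW.
case: (r =P 1) => [->|hr]; rewrite ?implyTb ?implyFb.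
  apply: eq_in_all => i; rewrite mem_iota => /andP[_ hi].
  rewrite nth_rcons0 // nth_rcons ltnn eqxx nth_rcons0 ?hs // nth_rcons hs ltnn eqxx.
  by rewrite add0n in hi; rewrite between0_rcons // hi eqxx.
apply: (introT allP) => i; rewrite mem_iota => /andP[_ hi].
rewrite [nth 0 (rcons R r) (size R)]nth_rcons ltnn eqxx; apply/negP => /and5P[_ _ /eqP] //.
Qed.

Lemma regB_rcons R W r a : size W = size R ->
  regB (rcons R r) (rcons W a) = regB R W && ((r == 0) ==> locB R W a).
Proof.
move=> hs; rewrite /regB size_rcons all2_rcons.
rewrite [X in [&& _, _ & X]](_ : _ = true) ?andbT; last first.
  by apply/allP => j; rewrite mem_iota => /andP[_ hj]; rewrite ltnNge -ltnS hj.
congr (_ && _).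
  apply: eq_in_all => i; rewrite mem_iota => /andP[_ hi].
  apply: eq_in_all => j; rewrite mem_iota => /andP[_ hj].
  by rewrite !nth_rcons0 ?hs // between0_rcons // ltnW.
case: (r =P 0) => [->|hr]; rewrite ?implyTb ?implyFb.
  apply: eq_in_all => i; rewrite mem_iota => /andP[_ hi].
  rewrite nth_rcons0 // nth_rcons ltnn eqxx nth_rcons0 ?hs // nth_rcons hs ltnn eqxx.
  by rewrite add0n in hi; rewrite between0_rcons // hi eqxx.
apply: (introT allP) => i; rewrite mem_iota => /andP[_ hi].
rewrite [nth 0 (rcons R r) (size R)]nth_rcons ltnn eqxx; apply/negP => /and5P[_ _ /eqP] //.
Qed.

Lemma count_rcons0 (c : nat) R r : count_mem c (rcons R r) = count_mem c R + (r == c).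
Proof. by rewrite -cats1 count_cat /= addn0 eq_sym. Qed.

Lemma G_rcons R W r a : size W = size R -> r < 3 -> count_mem 2 R <= count_mem 1 R ->
  (r == 2 -> count_mem 2 R < count_mem 1 R) ->
  G (rcons R r) (rcons W a) = G R W && loc R W r a.
Proof.
move=> hs hr h21 h2.
rewrite /G regA_rcons // regB_rcons // /onesW /twosW !filt_rcons // count_rcons0.
rewrite -/(onesW R W) -/(twosW R W) /loc.
have hso := size_onesW R W.
move: hr h2; case: r => [|[|[|//]]] _ h2 /=.
- rewrite !cats0 addn0.
  by case: (_ == _); case: (regA R W); case: (regB R W); case: (locB R W a).
- rewrite cats0 addn0 takel_cat ?hso //.
  by case: (_ == _); case: (regA R W); case: (regB R W); case: (locA R W a).
rewrite addn1 cats1 cats0 (take_nth 0) ?hso ?h2 // eqseq_rcons.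
by case: (_ == _); case: (regA R W); case: (regB R W); case: (a == _).
Qed.

Lemma sum_tuple_rcons (T : finType) n (F : seq T -> nat) :
  \sum_(t : n.+1.-tuple T) F t = \sum_(t : n.-tuple T) \sum_(a : T) F (rcons t a).
Proof.
rewrite pair_big /=.
pose h (p : n.-tuple T * T) : n.+1.-tuple T := rcons_tuple p.1 p.2.
pose g (t : n.+1.-tuple T) : n.-tuple T * T :=
  (belast_tuple (thead t) (behead_tuple t), last (thead t) (behead t)).
have hK : cancel h g.
  move=> [s a]; rewrite /g /h; congr pair.
    apply: val_inj => /=; case: s => -[|x s] hs //=.
    by rewrite belast_rcons.
  by case: s => -[|x s] hs //=; rewrite last_rcons.
have gK : cancel g h.
  move=> t; apply: val_inj => /=; rewrite -lastI.
  by case: t => -[|x s] //.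
rewrite (reindex h); last by exists g => x _; [apply: hK | apply: gK].
by apply: eq_bigr => -[s a] _.
Qed.

Lemma sum_eqb k b : b < k -> \sum_(a < k) (val a == b) = 1.
Proof.
move=> hb; rewrite (sum_count k (fun x => x == b)).
have -> : count (fun x => x == b) (iota 0 k) = count (pred1 b) (iota 0 k) by [].
by rewrite count_uniq_mem ?iota_uniq // mem_iota hb.
Qed.

Lemma sum_neqb k b : b < k -> \sum_(a < k) (val a != b) = k.-1.
Proof.
move=> hb; rewrite (sum_count k (fun x => x != b)).
have := count_predC (pred1 b) (iota 0 k); rewrite count_uniq_mem ?iota_uniq // mem_iota hb size_iota /=.
by move=> E; rewrite -[in RHS]E add1n.
Qed.

Lemma sum_true k : \sum_(a < k) (true : nat) = k.
Proof. by rewrite sum_nat_const card_ord muln1. Qed.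

Lemma in12 R i : all (fun x => x < 3) R -> i < size R -> (nth 0 R i \in [:: 1; 2]) = (nth 0 R i != 0).
Proof.
move=> /allP h hi; have := h _ (mem_nth 0 hi).
by case: (nth 0 R i) => [|[|[|]]].
Qed.

Lemma locB_nz R W a i0 : all (fun x => x < 3) R -> i0 < size R -> nth 0 R i0 != 0 ->
  between0 R i0 (size R) -> locB R W a = (nth 0 W i0 != a).
Proof.
move=> h3 hi0 hn hb; apply/allP/idP => [H|H i].
  by have := H i0; rewrite mem_iota hi0 in12 // hn hb /= => /(_ isT).
rewrite mem_iota /= => hi; rewrite in12 //; apply/negP => /and3P[a1 a2 /eqP a3].
have e := lastnz_uniq a1 hn a2 hb hi hi0.
by move: H; rewrite -e a3 eqxx.
Qed.

Lemma locB_z R W a : ~~ hasnz R -> locB R W a.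
Proof.
move=> /hasPn h; apply/allP => i; rewrite mem_iota /= => hi.
by have := h _ (mem_nth 0 hi); rewrite negbK => /eqP ->.
Qed.

Lemma locA_2 R W a i0 : i0 < size R -> nth 0 R i0 == 2 ->
  between0 R i0 (size R) -> locA R W a = (nth 0 W i0 != a).
Proof.
move=> hi0 hn hb; apply/allP/idP => [H|H i].
  by have := H i0; rewrite mem_iota hi0 hn hb /= => /(_ isT).
rewrite mem_iota /= => hi; apply/negP => /and3P[a1 a2 /eqP a3].
have e : i = i0 by apply: (lastnz_uniq _ _ a2 hb) => //; rewrite ?(eqP a1) ?(eqP hn).
by move: H; rewrite -e a3 eqxx.
Qed.

Lemma locA_n R W a : ~~ l2 R -> locA R W a.
Proof.
move=> /hasPn h; apply/allP => i hi; have := h _ hi.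
by rewrite negb_and => /orP[] /negbTE ->; rewrite ?andbF.
Qed.

Lemma sum_loc k R W r : size W = size R -> all (fun x => x < k) W -> all (fun x => x < 3) R ->
  r < 3 -> (r == 2 -> count_mem 2 R < count_mem 1 R) ->
  \sum_(a < k) loc R W r a =
  if r == 0 then (if hasnz R then k.-1 else k) else if r == 1 then (if l2 R then k.-1 else k) else 1.
Proof.
move=> hs /allP hW h3 hr h2; rewrite /loc.
case: r hr h2 => [|[|[|//]]] _ h2 /=.
- case: (boolP (hasnz R)) => hz.
    have [i0 hi0 /andP[hn hb]] := lastnz_ex hz.
    rewrite (eq_bigr (fun a : 'I_k => (val a != nth 0 W i0) : nat)); last first.
      by move=> a _; rewrite (locB_nz _ _ h3 hi0 hn hb) eq_sym.
    by rewrite sum_neqb // hW // mem_nth // hs.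
  by rewrite (eq_bigr (fun a : 'I_k => true : nat)) ?sum_true // => a _; rewrite locB_z.
- case: (boolP (l2 R)) => hz.
    have /hasP [i0] := hz; rewrite mem_iota /= => hi0 /andP[hn hb].
    rewrite (eq_bigr (fun a : 'I_k => (val a != nth 0 W i0) : nat)); last first.
      by move=> a _; rewrite (locA_2 _ _ hi0 hn hb) eq_sym.
    by rewrite sum_neqb // hW // mem_nth // hs.
  by rewrite (eq_bigr (fun a : 'I_k => true : nat)) ?sum_true // => a _; rewrite locA_n.
rewrite sum_eqb //; apply: hW.
have : nth 0 (onesW R W) (count_mem 2 R) \in onesW R W by rewrite mem_nth // size_onesW h2.
move=> /mapP [i]; rewrite mem_filter mem_iota /= => /andP[_ hi] ->.
by rewrite mem_nth // hs.
Qed.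

Definition PM (R : seq nat) := forall l, count_mem 2 (take l R) <= count_mem 1 (take l R).

Lemma PM_rcons R r : PM (rcons R r) -> PM R.
Proof.
move=> Hm l; case: (leqP l (size R)) => hl.
  by have := Hm l; rewrite -cats1 takel_cat.
have := Hm (size R); rewrite -cats1 takel_cat // take_size take_oversize //.
exact: ltnW.
Qed.

Lemma p_of_nil : p_of [::] = 0.
Proof. by rewrite /p_of big_ord0. Qed.
Lemma z_of_nil : z_of [::] = 0.
Proof. by rewrite z_ofE. Qed.

Lemma p_z_le R : p_of R <= count_mem 1 R /\ z_of R <= count_mem 0 R.
Proof.
elim/last_ind: R => [|R r [IH1 IH2]]; first by rewrite p_of_nil z_of_nil.
rewrite p_of_rcons z_of_rcons !count_rcons0; split.
  by apply: leq_add => //; case: (r == 1); rewrite ?leq_b1.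
by apply: leq_add => //; case: (r == 0); rewrite ?leq_b1.
Qed.

From mathcomp Require Import zify.

Lemma sum_tuple0 (T : finType) (F : seq T -> nat) : \sum_(t : 0.-tuple T) F t = F [::].
Proof.
rewrite (eq_bigr (fun _ => F [::])); last by move=> t _; rewrite tuple0.
by rewrite sum_nat_const card_tuple expn0 mul1n.
Qed.

Lemma arL1 k X Y X' Y' : X' = X -> Y' = Y.+1 -> k^X * k.-1^Y * k.-1 = k^X' * k.-1^Y'.
Proof. by move=> -> ->; rewrite expnS [k.-1 * _]mulnC mulnA. Qed.
Lemma arL2 k X Y X' Y' : X' = X.+1 -> Y' = Y -> k^X * k.-1^Y * k = k^X' * k.-1^Y'.
Proof. by move=> -> ->; rewrite expnS [k * _]mulnC [RHS]mulnAC. Qed.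
Lemma arL3 k X Y X' Y' : X' = X -> Y' = Y -> k^X * k.-1^Y * 1 = k^X' * k.-1^Y'.
Proof. by move=> -> ->; rewrite muln1. Qed.

Lemma count_G k n R : size R = n -> all (fun x => x < 3) R -> PM R ->
  \sum_(t : n.-tuple 'I_k) G R (map val t) =
  k ^ (count_mem 1 R - p_of R + z_of R) * k.-1 ^ (p_of R + (count_mem 0 R - z_of R)).
Proof.
elim: n R => [|n IH] R.
  move/size0nil => -> _ _; rewrite (sum_tuple0 (fun s => (G [::] (map val s) : nat))) p_of_nil z_of_nil /=.
  by rewrite /G /regA /regB.
case/lastP: R => [//|R r]; rewrite size_rcons => -[hs].
rewrite -cats1 all_cat /= andbT cats1 => /andP[h3 hr] hPM.
have hPM' := PM_rcons hPM.
have h21 : count_mem 2 R <= count_mem 1 R by have := hPM' (size R); rewrite take_size.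
have h2 : r == 2 -> count_mem 2 R < count_mem 1 R.
  move=> /eqP e; have := hPM (size R).+1; rewrite take_oversize ?size_rcons //.
  by rewrite !count_rcons0 e /= addn0 addn1.
rewrite (sum_tuple_rcons _ (fun s : seq 'I_k => (G (rcons R r) (map val s) : nat))).
rewrite (eq_bigr (fun t : n.-tuple 'I_k => G R (map val t) *
   (if r == 0 then (if hasnz R then k.-1 else k) else if r == 1 then (if l2 R then k.-1 else k) else 1))); last first.
  move=> t _.
  have hsW : size (map val t) = size R by rewrite size_map size_tuple.
  under eq_bigr => a _ do rewrite map_rcons G_rcons //.
  case: (G R (map val t)); last by rewrite mul0n big1.
  rewrite mul1n -(sum_loc (W := map val t)) //.
  apply/allP => x /mapP [y _ ->]; exact: ltn_ord.
rewrite -big_distrl /= IH //.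
have [hp hz] := p_z_le R.
rewrite p_of_rcons z_of_rcons !count_rcons0.
move: hr h2 hPM; case: r => [|[|[|//]]] _ _ _ /=.
- case: (hasnz R) => /=; [apply: arL1|apply: arL2];
  move: (count_mem 1 R) (count_mem 0 R) (p_of R) (z_of R) hp hz => c1 c0 p z hp hz; lia.
- case: (l2 R) => /=; [apply: arL1|apply: arL2];
  move: (count_mem 1 R) (count_mem 0 R) (p_of R) (z_of R) hp hz => c1 c0 p z hp hz; lia.
apply: arL3; move: (count_mem 1 R) (count_mem 0 R) (p_of R) (z_of R) hp hz => c1 c0 p z hp hz; lia.
Qed.


Lemma enumS n (P : pred nat) : map val (enum [set i : 'I_n | P i]) = filter P (iota 0 n).
Proof.
rewrite -val_enum_ord filter_map /enum_mem -enumT /=.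
congr map; rewrite [X in _ = filter _ X](eq_filter (a2 := predT)) ?filter_predT //.
apply: eq_filter => i /=; by rewrite inE.
Qed.

Lemma posL (f : pred nat) n t : t < size (filter f (iota 0 n)) ->
  [/\ nth 0 (filter f (iota 0 n)) t < n, f (nth 0 (filter f (iota 0 n)) t)
    & count f (iota 0 (nth 0 (filter f (iota 0 n)) t)) = t].
Proof.
elim: n t => [//|n IH] t; rewrite iotaS0 filter_rcons.
case: (boolP (f n)) => hf; last first.
  by move=> /IH [a b c]; split => //; exact: ltnW.
rewrite size_rcons ltnS leq_eqVlt => /orP[/eqP ->|ht].
  by rewrite nth_rcons ltnn eqxx ltnSn hf size_filter.
have [a b c] := IH _ ht; rewrite nth_rcons ht; split => //; exact: ltnW.
Qed.

Lemma forall2_iota n (P : 'I_n -> 'I_n -> bool) (Q : nat -> nat -> bool) :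
  (forall i j : 'I_n, P i j = Q i j) ->
  [forall i, forall j, P i j] = all (fun i => all (Q i) (iota 0 n)) (iota 0 n).
Proof.
move=> E; apply/forallP/allP => [Hm i|Hm i].
  rewrite mem_iota /= => hi; apply/allP => j; rewrite mem_iota /= => hj.
  by have := forallP (Hm (Ordinal hi)) (Ordinal hj); rewrite E.
apply/forallP => j; rewrite E.
have hi : val i \in iota 0 n by rewrite mem_iota /=.
by have /allP := Hm i hi; apply; rewrite mem_iota /=.
Qed.

Lemma tnth_val k n (t : n.-tuple 'I_k) (i : 'I_n) : val (tnth t i) = nth 0 (map val t) i.
Proof. by rewrite (tnth_nth (tnth t i)) (nth_map (tnth t i)) // size_tuple. Qed.

Lemma count012 R : all (fun x => x < 3) R -> count_mem 0 R + count_mem 1 R + count_mem 2 R = size R.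
Proof.
elim: R => //= x R IH /andP[hx /IH <-].
by case: x hx => [|[|[|]]] //= _; rewrite !add0n ?add1n ?addn0 ?addnS ?addSn.
Qed.

Section Eq.
Variables (k n : nat) (R : seq nat).
Hypotheses (hs : size R = n) (h3 : all (fun x => x < 3) R).
Let S1 := [set i : 'I_n | nth 0 R i == 1].
Let S2 := [set i : 'I_n | nth 0 R i == 2].

Lemma nthR3 (i : nat) : i < n -> nth 0 R i < 3.
Proof. by move=> hi; apply: (allP h3); rewrite mem_nth // hs. Qed.

Lemma R_of_S : R_of S1 S2 = R.
Proof.
rewrite /R_of (eq_map (g := fun i : 'I_n => nth 0 R i)); last first.
  move=> i; rewrite !inE; have := nthR3 (ltn_ord i).
  by case: (nth 0 R i) => [|[|[|]]].
have -> : map (fun i : 'I_n => nth 0 R i) (enum 'I_n) = map (nth 0 R) (map val (enum 'I_n)).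
  by rewrite -map_comp.
by rewrite val_enum_ord map_nth_iota0 ?hs // -hs take_size.
Qed.

Lemma nth_R_of (X1 X2 : {set 'I_n}) (i : 'I_n) :
  nth 0 (R_of X1 X2) i = if i \in X1 then 1 else if i \in X2 then 2 else 0.
Proof. by rewrite /R_of (nth_map i) ?size_enum_ord // nth_ord_enum. Qed.

Lemma R_of_inj (X1 X2 : {set 'I_n}) : [disjoint X1 & X2] -> R_of X1 X2 = R -> X1 = S1 /\ X2 = S2.
Proof.
move=> dj e; split; apply/setP => i; rewrite !inE -e nth_R_of.
  by case: (i \in X1); case: (i \in X2).
case: (boolP (i \in X1)) => h1; last by case: (i \in X2).
by rewrite (disjointFr dj h1).
Qed.

Lemma sub_S (t : n.-tuple 'I_k) c :
  map val (subword t [set i : 'I_n | nth 0 R i == c]) =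
  [seq nth 0 (map val t) i | i <- iota 0 (size R) & nth 0 R i == c].
Proof.
rewrite /subword -map_comp (eq_map (g := fun i : 'I_n => nth 0 (map val t) i)); last first.
  by move=> i /=; rewrite tnth_val.
have -> : map (fun i : 'I_n => nth 0 (map val t) i) (enum [set i : 'I_n | nth 0 R i == c])
  = map (nth 0 (map val t)) (map val (enum [set i : 'I_n | nth 0 R i == c])).
  by rewrite -map_comp.
by rewrite (enumS n (fun i => nth 0 R i == c)) hs.
Qed.

Lemma regular_eq (t : n.-tuple 'I_k) : regular t S1 S2 = regA R (map val t) && regB R (map val t).
Proof.
rewrite /regular R_of_S /regA /regB hs; congr andb; apply: forall2_iota => i j.
  by rewrite -[tnth t i == tnth t j]val_eqE /= !tnth_val.
by rewrite -[tnth t i == tnth t j]val_eqE /= !tnth_val.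
Qed.

Lemma monotone_S : count_mem 1 R = count_mem 2 R -> PM R -> monotone S1 S2.
Proof.
move=> e12 hPM; apply/forallP => -[t0 _] /=; apply/implyP.
rewrite /positions /S1 /S2 (enumS n (fun i => nth 0 R i == 1)) (enumS n (fun i => nth 0 R i == 2)).
rewrite cardE -(size_map val) (enumS n (fun i => nth 0 R i == 1)).
rewrite size_filter -hs (count_nth_iota (pred1 1)) => ht.
have ht1 : t0 < size [seq i <- iota 0 (size R) | nth 0 R i == 1].
  by rewrite size_filter (count_nth_iota (pred1 1)).
have ht2 : t0 < size [seq i <- iota 0 (size R) | nth 0 R i == 2].
  by rewrite size_filter (count_nth_iota (pred1 2)) -e12.
have [a1 b1 c1] := posL ht1; have [a2 b2 c2] := posL ht2.
set q1 := nth 0 _ t0 in a1 b1 c1 *; set q2 := nth 0 _ t0 in a2 b2 c2 *.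
rewrite ltnNge; apply/negP => hle.
have hne : q2 != q1 by apply/eqP => e; move: b1; rewrite -e (eqP b2).
have hlt : q2 < q1 by rewrite ltn_neqAle hne hle.
have := hPM q2.+1; rewrite -(map_nth_iota0 0) // !count_map.
rewrite iotaS0 -cats1 !count_cat /= c2 (eqP b2) /= addn0.
have : count (preim (nth 0 R) (pred1 1)) (iota 0 q2.+1) <= t0.
  rewrite -c1 -(subnKC hlt) iotaD count_cat; exact: leq_addr.
rewrite iotaS0 -cats1 count_cat /= (eqP b2) /= addn0 => h1 h2.
by move: (leq_trans h2 h1); rewrite addn1 ltnn.
Qed.

Lemma B_G (t : n.-tuple 'I_k) : count_mem 1 R = count_mem 2 R -> PM R ->
  B_event R t = G R (map val t).
Proof.
move=> e12 hPM; apply/existsP/idP.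
  move=> [X1 /existsP [X2 /and4P [/andP [dj /eqP sw] mo rg /eqP hR]]].
  have [e1 e2] := R_of_inj dj hR; subst X1 X2.
  rewrite /G -(regular_eq t) rg andbT.
  rewrite take_oversize; last by rewrite /onesW size_map size_filter (count_nth_iota (pred1 1)) e12.
  by rewrite /onesW /twosW -!sub_S sw.
move=> /and3P [tw ra rb]; exists S1; apply/existsP; exists S2.
rewrite regular_eq ra rb R_of_S eqxx monotone_S // !andbT /twins.
apply/andP; split.
  by rewrite disjoint_subset; apply/subsetP => i; rewrite !inE => /eqP ->.
apply/eqP/(inj_map val_inj); rewrite !sub_S -/(onesW R (map val t)) -/(twosW R (map val t)).
move/eqP: tw => ->; rewrite take_oversize //.
by rewrite /onesW size_map size_filter (count_nth_iota (pred1 1)) e12.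
Qed.

End Eq.
From mathcomp Require Import ring.
Unset Implicit Arguments.
Import GRing.Theory Num.Theory.
Local Open Scope ring_scope.

Lemma rat_arith (k A B m : nat) : (0 < k)%N ->
  (k ^ A * k.-1 ^ B)%:R / (k ^ (A + B + m))%:R
  = (1 / k%:R) ^+ m * (1 - 1 / k%:R) ^+ B :> rat.
Proof.
move=> hk.
have kE : k%:R = k.-1%:R + 1 :> rat by rewrite natr1 prednK.
have k0 : k%:R != 0 :> rat by rewrite pnatr_eq0 -lt0n.
rewrite natrM !natrX !exprD.
have -> : 1 - 1 / k%:R = k.-1%:R / k%:R :> rat.
  rewrite kE; field; by rewrite -kE.
rewrite !expr_div_n !expr1n; field.
by rewrite !expf_neq0.
Qed.

Theorem lemma19 (k n m p z : nat) (R : seq nat) :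
  (2 <= k)%N ->
  in_Rnm n m R -> p_of R = p -> z_of R = z -> in_M R ->
  prob_B k n R
  = (1 / k%:R) ^+ m * (1 - 1 / k%:R) ^+ (p + n - 2 * m - z)%N.
Proof.
move=> hk /and4P[/eqP hs h3 /eqP c1 /eqP c2] hp hz hM.
have hPM : PM R := hM.
have hcard : #|[set w : n.-tuple 'I_k | B_event R w]| =
    (k ^ (count_mem 1 R - p_of R + z_of R) * k.-1 ^ (p_of R + (count_mem 0 R - z_of R)))%N.
  rewrite -sum1_card big_mkcond /= -(count_G k hs h3 hPM).
  apply: eq_bigr; move=> w _.
  rewrite inE (B_G hs h3) //; last by rewrite c1 c2.
  
have e0 := count012 h3.
have [pl zl] := p_z_le R.
rewrite /prob_B hcard c1 hp hz.
rewrite c1 c2 hs hp hz in e0 pl zl.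
have -> : (p + n - 2 * m - z = p + (count_mem 0 R - z))%N by lia.
have -> : n = (m - p + z + (p + (count_mem 0 R - z)) + m)%N by lia.
apply: rat_arith; lia.
Qed.
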